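(* Let $\mathcal C$ be an $R$-coring satisfying the left $\alpha$-condition, and suppose $\mathcal C=\bigoplus_{i\in I}C_i$ as left $\mathcal C$-comodules. Then $\mathrm{Rat}^{\mathcal C}({}^*C_i)$ is dense in ${}^*C_i$ (finite topology) for every $i\in I$ if and only if $\mathrm{Rat}^{\mathcal C}({}^*\mathcal C)$ is dense in ${}^*\mathcal C$ (finite topology).
   Context: An $R$-coring is a triple $(\mathcal C,\Delta,\varepsilon)$ with $\mathcal C$ an $R$-bimodule and $\Delta:\mathcal C\to\mathcal C\otimes_R\mathcal C$, $\varepsilon:\mathcal C\to R$ coassociative and counital $R$-bimodule maps; write $\Delta(c)=c_{(1)}\otimes_R c_{(2)}$. ${}^*\mathcal C={}_R\mathrm{Hom}(\mathcal C,R)$ is a ring with product $(f\#g)(c)=g(c_{(1)}f(c_{(2)}))$. $\mathcal C$ satisfies the left $\alpha$-condition if it is locally projective as a left $R$-module. A left $\mathcal C$-comodule is a left $R$-module $M$ with a coassociative counital left $R$-linear map $M\to\mathcal C\otimes_R M$, $m\mapsto m_{[-1]}\otimes m_{[0]}$; $\mathcal C$ is a left comodule via $\Delta$. For a left comodule $M$, ${}^*M={}_R\mathrm{Hom}(M,R)$ is a right ${}^*\mathcal C$-module via $(h\cdot f)(m)=f(m_{[-1]}h(m_{[0]}))$ (for $M=\mathcal C$ this is right multiplication in ${}^*\mathcal C$). For a right ${}^*\mathcal C$-module $N$, $\mathrm{Rat}^{\mathcal C}(N)$ is the set of $n\in N$ for which there is $\sum_i n_i\otimes c_i\in N\otimes_R\mathcal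 C$ with $n\cdot f=\sum_i n_if(c_i)$ for all $f\in{}^*\mathcal C$ (the largest rational submodule). The finite topology on ${}_R\mathrm{Hom}(M,R)$ has basic open sets $\{g\mid g(x)=f(x)\ \forall x\in F\}$, $F\subseteq M$ finite. *)

(* Defs.v *)
From HB Require Import structures.
From mathcomp Require Import all_boot all_order all_algebra.
From Stdlib Require List.
Set Implicit Arguments. Unset Strict Implicit. Unset Printing Implicit Defensive.
Import GRing.Theory.
Local Open Scope ring_scope.

(* Left R-modules are [lmodType R].  An R-bimodule structure on C is the left
   structure of [C] plus a right action [ra : C -> R -> C]. *)

Definition is_bimodule (R : pzRingType) (C : lmodType R) (ra : C -> R -> C) :=
  [/\ forall x y r, ra (x + y) r = ra x r + ra y r,
      forall x r s, ra x (r + s) = ra x r + ra x s,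
      forall x r s, ra x (r * s) = ra (ra x r) s,
      forall x, ra x 1 = x
    & forall r x s, ra (r *: x) s = r *: ra x s].

(* Elements of C (x)_R C are represented by finite lists of pairs (formal sums
   of simple tensors); [teq2 ra s t] is the congruence defining C (x)_R C
   (the tensor product is the free commutative monoid on C*C modulo these
   relations, which is the usual abelian group C (x)_R C). *)
Inductive teq2 (R : pzRingType) (C : lmodType R) (ra : C -> R -> C) :
    seq (C * C) -> seq (C * C) -> Prop :=
| teq2_refl s : teq2 ra s s
| teq2_sym s t : teq2 ra s t -> teq2 ra t s
| teq2_trans s t u : teq2 ra s t -> teq2 ra t u -> teq2 ra s u
| teq2_cat s1 t1 s2 t2 : teq2 ra s1 t1 -> teq2 ra s2 t2 ->
    teq2 ra (s1 ++ s2) (t1 ++ t2)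
| teq2_swap s t : teq2 ra (s ++ t) (t ++ s)
| teq2_addl a b y : teq2 ra [:: (a + b, y)] [:: (a, y); (b, y)]
| teq2_addr a y z : teq2 ra [:: (a, y + z)] [:: (a, y); (a, z)]
| teq2_zerol y : teq2 ra [:: (0, y)] [::]
| teq2_zeror a : teq2 ra [:: (a, 0)] [::]
| teq2_bal a r y : teq2 ra [:: (ra a r, y)] [:: (a, r *: y)].

(* The same for C (x)_R C (x)_R C, elements ((a, b), c) meaning a (x) b (x) c. *)
Inductive teq3 (R : pzRingType) (C : lmodType R) (ra : C -> R -> C) :
    seq (C * C * C) -> seq (C * C * C) -> Prop :=
| teq3_refl s : teq3 ra s s
| teq3_sym s t : teq3 ra s t -> teq3 ra t s
| teq3_trans s t u : teq3 ra s t -> teq3 ra t u -> teq3 ra s u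
| teq3_cat s1 t1 s2 t2 : teq3 ra s1 t1 -> teq3 ra s2 t2 ->
    teq3 ra (s1 ++ s2) (t1 ++ t2)
| teq3_swap s t : teq3 ra (s ++ t) (t ++ s)
| teq3_add1 a a' b c : teq3 ra [:: (a + a', b, c)] [:: (a, b, c); (a', b, c)]
| teq3_add2 a b b' c : teq3 ra [:: (a, b + b', c)] [:: (a, b, c); (a, b', c)]
| teq3_add3 a b c c' : teq3 ra [:: (a, b, c + c')] [:: (a, b, c); (a, b, c')]
| teq3_zero1 b c : teq3 ra [:: (0, b, c)] [::]
| teq3_zero2 a c : teq3 ra [:: (a, 0, c)] [::]
| teq3_zero3 a b : teq3 ra [:: (a, b, 0)] [::]
| teq3_bal12 a r b c : teq3 ra [:: (ra a r, b, c)] [:: (a, r *: b, c)]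
| teq3_bal23 a b r c : teq3 ra [:: (a, ra b r, c)] [:: (a, b, r *: c)].

(* An R-coring structure on C: right action [ract], comultiplication [Delta]
   (Delta c is a representative of Delta(c) in C (x)_R C) and counit [eps]. *)
Record coring (R : pzRingType) (C : lmodType R) := Coring {
  ract : C -> R -> C;
  Delta : C -> seq (C * C);
  eps : C -> R;
  ract_bimod : is_bimodule ract;
  Delta_add : forall x y, teq2 ract (Delta (x + y)) (Delta x ++ Delta y);
  Delta_lin : forall r x,
    teq2 ract (Delta (r *: x)) [seq (r *: p.1, p.2) | p <- Delta x];
  Delta_rlin : forall x r,
    teq2 ract (Delta (ract x r)) [seq (p.1, ract p.2 r) | p <- Delta x];
  eps_add : forall x y, eps (x + y) = eps x + eps y;
  eps_lin : forall r x, eps (r *: x) = r * eps x;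
  eps_rlin : forall x r, eps (ract x r) = eps x * r;
  Delta_coassoc : forall c,
    teq3 ract
      (flatten [seq [seq (q.1, q.2, p.2) | q <- Delta p.1] | p <- Delta c])
      (flatten [seq [seq (p.1, q.1, q.2) | q <- Delta p.2] | p <- Delta c]);
  counit_l : forall c, \sum_(p <- Delta c) eps p.1 *: p.2 = c;
  counit_r : forall c, \sum_(p <- Delta c) ract p.1 (eps p.2) = c
}.

Definition llinear (R : pzRingType) (M N : lmodType R) (f : M -> N) :=
  (forall x y, f (x + y) = f x + f y) /\ (forall r x, f (r *: x) = r *: f x).

(* Local projectivity of a left R-module (Zimmermann-Huisgen): for every
   epimorphism p : L -> N, every g : M -> N and every finitely generated
   submodule M0 of M (given by a finite generating list F) there is
   h : M -> L with p o h = g on M0. *)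
Definition locally_projective (R : pzRingType) (M : lmodType R) :=
  forall (L N : lmodType R) (p : L -> N) (g : M -> N) (F : seq M),
    llinear p -> (forall n, exists l, p l = n) -> llinear g ->
    exists h : M -> L, llinear h /\
      (forall m, (exists a : seq R,
                    m = \sum_(i < size F) a`_i *: F`_i) -> p (h m) = g m).

Definition left_alpha_condition (R : pzRingType) (C : lmodType R)
  (K : coring C) := locally_projective C.

(* Left R-linear functionals on a left R-submodule P of C (values outside P
   are irrelevant): the elements of *P = _R Hom(P, R). *)
Definition ldual_on (R : pzRingType) (C : lmodType R) (P : C -> Prop)
    (h : C -> R) :=
  (forall x y, P x -> P y -> h (x + y) = h x + h y) /\
  (forall r x, P x -> h (r *: x) = r * h x).

Definition ldual (R : pzRingType) (C : lmodType R) (f : C -> R) :=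
  ldual_on (fun _ => True) f.

Definition lsubmod (R : pzRingType) (C : lmodType R) (P : C -> Prop) :=
  [/\ P 0, forall x y, P x -> P y -> P (x + y) & forall r x, P x -> P (r *: x)].

(* P is a left subcomodule of C: the coaction (restriction of Delta) lands in
   C (x)_R P, i.e. Delta m has a representative with second factors in P. *)
Definition lsubcomod (R : pzRingType) (C : lmodType R) (K : coring C)
    (P : C -> Prop) :=
  lsubmod P /\
  forall m, P m -> exists D, teq2 (ract K) (Delta K m) D /\
                             forall q, q \in D -> P q.2.

Definition coact_rep (R : pzRingType) (C : lmodType R) (K : coring C)
    (P : C -> Prop) (m : C) (D : seq (C * C)) :=
  teq2 (ract K) (Delta K m) D /\ forall q, q \in D -> P q.2.

(* Rat^C( *P ): h in *P is rational iff there are n_j in *P, c_j in C with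
   h . f = sum_j n_j f(c_j) for all f in *C, where the right *C-action is
   (h . f)(m) = f(m_[-1] h(m_[0])) and *P is a right R-module via
   (n r)(m) = n(m) r. *)
Definition rational (R : pzRingType) (C : lmodType R) (K : coring C)
    (P : C -> Prop) (h : C -> R) :=
  exists L : seq ((C -> R) * C),
    (forall q, List.In q L -> ldual_on P q.1) /\
    forall (f : C -> R) (m : C) (D : seq (C * C)),
      ldual f -> P m -> coact_rep K P m D ->
      f (\sum_(q <- D) ract K q.1 (h q.2)) = \sum_(q <- L) q.1 m * f q.2.

Definition rat_dense (R : pzRingType) (C : lmodType R) (K : coring C)
    (P : C -> Prop) :=
  forall (h : C -> R) (F : seq C), ldual_on P h -> (forall x, x \in F -> P x) ->
    exists g, ldual_on P g /\ rational K P g /\ forall x, x \in F -> g x = h x.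

Definition comod_decomposition (R : pzRingType) (C : lmodType R)
    (K : coring C) (I : eqType) (Ci : I -> C -> Prop) :=
  [/\ forall i, lsubcomod K (Ci i),
      forall c, exists s : seq (I * C),
        (forall q, q \in s -> Ci q.1 q.2) /\ c = \sum_(q <- s) q.2
    & forall (s : seq I) (m : I -> C), uniq s -> (forall i, Ci i (m i)) ->
        \sum_(i <- s) m i = 0 -> forall i, i \in s -> m i = 0].

(* Main.v *)
Require Import Defs.
From HB Require Import structures.
From mathcomp Require Import all_boot all_order all_algebra.
From Stdlib Require Import ClassicalEpsilon.

Import GRing.Theory.

Lemma self_add0 (V : zmodType) (a : V) : a = (a + a)%R -> a = 0%R.
Proof. by move=> h; rewrite -[RHS](subrr a) {2}h addrK. Qed.

Lemma In_cat {A : Type} {x : A} {s t : seq A} : List.In x (s ++ t) -> List.In x s \/ List.In x t.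
Proof. elim: s => [|a s IH] /=; first by right. by move=> [->|/IH [] ?]; auto. Qed.
Lemma In_map {A B : Type} {f : A -> B} {s : seq A} {y} : List.In y (map f s) -> exists x, List.In x s /\ y = f x.
Proof.
elim: s => [|a s IH] //= [e|/IH [x [h1 h2]]].
  by exists a; split; [left|rewrite e].
by exists x; split; [right|].
Qed.
Lemma In_flat {A B : Type} {f : A -> seq B} {s : seq A} {y} : List.In y (flatten (map f s)) -> exists x, List.In x s /\ List.In y (f x).
Proof.
elim: s => [|a s IH] //= /In_cat [h|/IH [x [h1 h2]]].
  by exists a; split; [left|].
by exists x; split; [right|].
Qed.

Section Aux.
Local Open Scope ring_scope.
Variables (R : pzRingType) (C : lmodType R) (K : coring C).
Local Notation ra := (ract K).

Lemma ra_addr x r s : ra x (r + s) = ra x r + ra x s.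
Proof. by case: (ract_bimod K) => _ H _ _ _; apply H. Qed.
Lemma ra_addl x y r : ra (x + y) r = ra x r + ra y r.
Proof. by case: (ract_bimod K) => H _ _ _ _; apply H. Qed.
Lemma ra_mul x r s : ra x (r * s) = ra (ra x r) s.
Proof. by case: (ract_bimod K) => _ _ H _ _; apply H. Qed.
Lemma ra0r x : ra x 0 = 0.
Proof. by apply: self_add0; rewrite -ra_addr addr0. Qed.
Lemma ra0l r : ra 0 r = 0.
Proof. by apply: self_add0; rewrite -ra_addl addr0. Qed.

Lemma ldual_add {P : C -> Prop} {h} : ldual_on P h -> P 0 -> h 0 = 0.
Proof. by move=> [ha _] P0; apply: self_add0; rewrite -ha // addr0. Qed.

Definition Sphi (phi : C -> R) (D : seq (C * C)) := \sum_(q <- D) ra q.1 (phi q.2).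

Lemma teq2_inv {phi} : ldual phi -> forall {D D'}, teq2 ra D D' -> Sphi phi D = Sphi phi D'.
Proof.
move=> lp; have p0 := ldual_add lp I; case: lp => pa pl.
move=> D D'; elim => //=; rewrite /Sphi.
- by move=> ? ? ? _ -> _ ->.
- by move=> s1 t1 s2 t2 _ e1 _ e2; rewrite !big_cat e1 e2.
- by move=> s t; rewrite !big_cat /= addrC.
- by move=> a b y; rewrite !big_cons !big_nil /= ra_addl !addr0.
- by move=> a y z; rewrite !big_cons !big_nil /= pa // ra_addr !addr0.
- by move=> y; rewrite !big_cons !big_nil /= ra0l !addr0.
- by move=> a; rewrite !big_cons !big_nil /= p0 ra0r !addr0.
- by move=> a r y; rewrite !big_cons !big_nil /= pl // ra_mul !addr0.
Qed.

Definition T phi x := Sphi phi (Delta K x).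

Lemma T_add {phi} : ldual phi -> forall x y, T phi (x + y) = T phi x + T phi y.
Proof. by move=> lp x y; rewrite /T (teq2_inv lp (Delta_add K x y)) /Sphi big_cat. Qed.

Lemma T0 {phi} : ldual phi -> T phi 0 = 0.
Proof. by move=> lp; apply: self_add0; rewrite -T_add // addr0. Qed.

Variables (J : eqType) (Ci : J -> C -> Prop) (dec : comod_decomposition K Ci).

Lemma Ci_sub i : lsubmod (Ci i).
Proof. by case: dec => H _ _; case: (H i). Qed.
Lemma Ci0 i : Ci i 0. Proof. by case: (Ci_sub i). Qed.
Lemma CiD i x y : Ci i x -> Ci i y -> Ci i (x + y). Proof. by case: (Ci_sub i) => _ H _; apply H. Qed.
Lemma CiZ i r x : Ci i x -> Ci i (r *: x). Proof. by case: (Ci_sub i) => _ _ H; apply H. Qed.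
Lemma CiN i x : Ci i x -> Ci i (- x). Proof. by move=> h; rewrite -scaleN1r; apply: CiZ. Qed.
Lemma Ci_sum i (A : eqType) (s : seq A) (P : pred A) (F : A -> C) :
  (forall j, j \in s -> P j -> Ci i (F j)) -> Ci i (\sum_(j <- s | P j) F j).
Proof.
move=> h; rewrite big_seq_cond; apply: big_ind => //; [apply: Ci0 | apply: CiD|].
by move=> j /andP [] /h.
Qed.

Lemma dex c : exists s : seq (J * C), (forall q, q \in s -> Ci q.1 q.2) /\ c = \sum_(q <- s) q.2.
Proof. by case: dec => _ H _; apply H. Qed.
Definition sd c := proj1_sig (constructive_indefinite_description _ (dex c)).
Lemma sdP c : (forall q, q \in sd c -> Ci q.1 q.2) /\ c = \sum_(q <- sd c) q.2.
Proof. exact: (proj2_sig (constructive_indefinite_description _ (dex c))). Qed.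

Definition pi i c := \sum_(q <- sd c | q.1 == i) q.2.

Lemma sum_part (U : seq J) (t : seq (J * C)) : uniq U -> (forall q, q \in t -> q.1 \in U) ->
  \sum_(j <- U) \sum_(q <- t | q.1 == j) q.2 = \sum_(q <- t) q.2.
Proof.
move=> uU tU; under eq_bigr => j _ do rewrite big_mkcond.
rewrite exchange_big /= big_seq [RHS]big_seq; apply: eq_bigr => q qt.
rewrite (bigD1_seq q.1) ?tU //= eqxx big1 ?addr0 // => j /negPf.
by rewrite eq_sym => ->.
Qed.

Lemma pi_uniq t c i : (forall q, q \in t -> Ci q.1 q.2) -> c = \sum_(q <- t) q.2 ->
  pi i c = \sum_(q <- t | q.1 == i) q.2.
Proof.
move=> ht hc; case: (sdP c) => hs hc'; rewrite /pi.
set U := undup ([seq q.1 | q <- sd c] ++ [seq q.1 | q <- t]).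
have uU : uniq U by apply: undup_uniq.
have sU : forall q, q \in sd c -> q.1 \in U.
  by move=> q qs; rewrite mem_undup mem_cat map_f.
have tU : forall q, q \in t -> q.1 \in U.
  by move=> q qs; rewrite mem_undup mem_cat; apply/orP; right; apply: map_f.
pose m j := \sum_(q <- sd c | q.1 == j) q.2 - \sum_(q <- t | q.1 == j) q.2.
case: dec => _ _ H.
have mC : forall j, Ci j (m j).
  move=> j; apply: CiD; last apply: CiN.
    by apply: Ci_sum => q qs /eqP <-; apply: hs.
  by apply: Ci_sum => q qs /eqP <-; apply: ht.
have hm := H U m uU mC.
have : \sum_(j <- U) m j = 0.
  by rewrite sumrB sum_part // sum_part // -hc -hc' subrr.
move=> /hm {}hm.
case iU: (i \in U).
  by apply/eqP; rewrite -subr_eq0; apply/eqP; apply: hm.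
rewrite [LHS]big1_seq => [|q /andP [/eqP qi qs]]; last by move: iU; rewrite -qi sU.
by rewrite big1_seq // => q /andP [/eqP qi qs]; move: iU; rewrite -qi tU.
Qed.

Lemma pi_in i c : Ci i (pi i c).
Proof. by apply: Ci_sum => q qs /eqP <-; case: (sdP c) => h _; apply: h. Qed.

Lemma pi_add i x y : pi i (x + y) = pi i x + pi i y.
Proof.
rewrite (@pi_uniq (sd x ++ sd y)).
- by rewrite big_cat.
- by move=> q; rewrite mem_cat => /orP [] q1; [case: (sdP x) => h _ | case: (sdP y) => h _]; apply: h.
- by rewrite big_cat /= -(sdP x).2 -(sdP y).2.
Qed.

Lemma pi_scale i r x : pi i (r *: x) = r *: pi i x.
Proof.
rewrite (@pi_uniq [seq (q.1, r *: q.2) | q <- sd x]).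
- by rewrite big_map scaler_sumr.
- move=> q /mapP [q' q's ->] /=; apply: CiZ; by case: (sdP x) => h _; apply: h.
by rewrite big_map -scaler_sumr -(sdP x).2.
Qed.

Lemma pi_self i c : Ci i c -> pi i c = c.
Proof.
move=> h; rewrite (@pi_uniq [:: (i, c)]).
- by rewrite big_cons big_nil /= eqxx addr0.
- by move=> q; rewrite inE => /eqP ->.
by rewrite big_cons big_nil addr0.
Qed.

Lemma pi_other i j c : Ci j c -> j != i -> pi i c = 0.
Proof.
move=> h ji; rewrite (@pi_uniq [:: (j, c)]).
- by rewrite big_cons big_nil /= (negPf ji).
- by move=> q; rewrite inE => /eqP ->.
by rewrite big_cons big_nil addr0.
Qed.

Lemma pi_sum U c : uniq U -> (forall q, q \in sd c -> q.1 \in U) ->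
  \sum_(j <- U) pi j c = c.
Proof. by move=> uU sU; rewrite /pi sum_part // -(sdP c).2. Qed.

Lemma dir1 : rat_dense K (fun _ => True) -> forall i, rat_dense K (Ci i).
Proof.
move=> HT i h F hh hF.
pose H := fun c => h (pi i c).
have lH : ldual H.
  split => [x y _ _ | r x _]; rewrite /H ?pi_add ?pi_scale.
    by apply: hh.1; apply: pi_in.
  by apply: hh.2; apply: pi_in.
have [G [lG [rG eG]]] := HT H F lH (fun _ _ => I).
exists G; split; [|split].
- by split => [x y _ _|r x _]; [apply: lG.1|apply: lG.2].
- case: rG => L [hL eL]; exists L; split.
  + by move=> q /hL [a b]; split => *; [apply: a|apply: b].
  + by move=> f m D lf _ [tD _]; apply: eL => //; split.
- by move=> x xF; rewrite eG // /H pi_self //; apply: hF.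
Qed.

Lemma Ci_comod i m : Ci i m -> exists D, teq2 ra (Delta K m) D /\ forall q, q \in D -> Ci i q.2.
Proof. by case: dec => H _ _; case: (H i) => _; apply. Qed.

Lemma dir2 : (forall i, rat_dense K (Ci i)) -> rat_dense K (fun _ => True).
Proof.
move=> Hi h F hh _.
have hhi : forall i, ldual_on (Ci i) h.
  by move=> i; split => [x y _ _|r x _]; [apply: hh.1|apply: hh.2].
have memF i : forall x, x \in [seq pi i y | y <- F] -> Ci i x.
  by move=> x /mapP [y _ ->]; apply: pi_in.
have ex i := Hi i h [seq pi i x | x <- F] (hhi i) (memF i).
pose g i := proj1_sig (constructive_indefinite_description _ (ex i)).
have gP i : ldual_on (Ci i) (g i) /\ rational K (Ci i) (g i) /\
    forall x, x \in [seq pi i y | y <- F] -> g i x = h x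
  := proj2_sig (constructive_indefinite_description _ (ex i)).
pose Lf i := proj1_sig (constructive_indefinite_description _ (gP i).2.1).
have LP i : (forall q, List.In q (Lf i) -> ldual_on (Ci i) q.1) /\
    (forall f m D, ldual f -> Ci i m -> coact_rep K (Ci i) m D ->
      f (\sum_(q <- D) ra q.1 (g i q.2)) = \sum_(q <- Lf i) q.1 m * f q.2)
  := proj2_sig (constructive_indefinite_description _ (gP i).2.1).
have g0 i : g i 0 = 0 by apply: (ldual_add (gP i).1 (Ci0 i)).
set S := undup (flatten [seq [seq q.1 | q <- sd x] | x <- F]).
have uS : uniq S by apply: undup_uniq.
pose G := fun c => \sum_(i <- S) g i (pi i c).
have phiL i : ldual (fun c => g i (pi i c)).
  split => [x y _ _|r x _]; rewrite ?pi_add ?pi_scale.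
    by apply: (gP i).1.1; apply: pi_in.
  by apply: (gP i).1.2; apply: pi_in.
exists G; split; [|split].
- split => [x y _ _|r x _]; rewrite /G.
    by rewrite -big_split /=; apply: eq_bigr => i _; apply: (phiL i).1.
  by rewrite mulr_sumr; apply: eq_bigr => i _; apply: (phiL i).2.
- exists (flatten [seq [seq ((fun c => q.1 (pi i c)), q.2) | q <- Lf i] | i <- S]); split.
  + move=> q /In_flat [i [_ /In_map [q' [q'L ->]]]] /=.
    have [a b] := (LP i).1 q' q'L.
    by split => [x y _ _|r x _]; rewrite ?pi_add ?pi_scale; [apply: a|apply: b]; apply: pi_in.
  + move=> f m D lf _ [tD _].
    have fsum : forall (A : Type) (s : seq A) (F0 : A -> C),
        f (\sum_(a <- s) F0 a) = \sum_(a <- s) f (F0 a).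
      move=> A s0 F0; apply: big_morph; [by move=> x y; apply: lf.1 | exact: (ldual_add lf I)].
    rewrite big_flatten /= big_map /G.
    under eq_bigr => q _ do rewrite (big_morph _ (ra_addr q.1) (ra0r q.1)).
    rewrite exchange_big fsum; apply: eq_bigr => i _.
    rewrite big_map.
    change (f (Sphi (fun c => g i (pi i c)) D) = \sum_(q <- Lf i) q.1 (pi i m) * f q.2).
    rewrite -(teq2_inv (phiL i) tD).
    set U := undup (i :: [seq q.1 | q <- sd m]).
    have uU : uniq U by apply: undup_uniq.
    have sU : forall q, q \in sd m -> q.1 \in U.
      by move=> q qs; rewrite mem_undup inE map_f ?orbT.
    have iU : i \in U by rewrite mem_undup inE eqxx.
    have e2 : T (fun c => g i (pi i c)) m = T (fun c => g i (pi i c)) (pi i m).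
      rewrite -{1}(pi_sum U m uU sU) (big_morph _ (T_add (phiL i)) (T0 (phiL i))).
      rewrite (bigD1_seq i) //= big1 ?addr0 // => j ji.
      have [D' [tD' hD']] := Ci_comod j (pi j m) (pi_in j m).
      rewrite /T (teq2_inv (phiL i) tD') /Sphi big1_seq // => q /andP [_ qD].
      by rewrite (pi_other i j q.2 (hD' q qD) ji) g0 ra0r.
    change (f (T (fun c => g i (pi i c)) m) = \sum_(q <- Lf i) q.1 (pi i m) * f q.2).
    have [Di [tDi hDi]] := Ci_comod i (pi i m) (pi_in i m).
    rewrite e2 /T (teq2_inv (phiL i) tDi) /Sphi.
    rewrite -((LP i).2 f (pi i m) Di lf (pi_in i m) (conj tDi hDi)).
    by congr (f _); apply: eq_big_seq => q qD; rewrite pi_self //; apply: hDi.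
- move=> x xF; rewrite /G.
  transitivity (\sum_(i <- S) h (pi i x)).
    by apply: eq_bigr => i _; apply: (gP i).2.2; apply: map_f.
  rewrite -(big_morph h (fun x y => hh.1 x y I I) (ldual_add hh I)) pi_sum //.
  move=> q qs; rewrite mem_undup; apply/flatten_mapP; by exists x => //; apply: map_f.
Qed.

End Aux.

Theorem proposition2p4 (R : pzRingType) (C : lmodType R) (K : coring C)
  (alpha : left_alpha_condition K)
  (I : eqType) (Ci : I -> C -> Prop) (dec : comod_decomposition K Ci) :
  (forall i, rat_dense K (Ci i)) <-> rat_dense K (fun _ => True).
Proof.
split; [exact: dir2 dec | exact: dir1 dec].
Qed.
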